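(* Let $Z$ be a topological space and $\ell>0$. Then there is a homeomorphism $\mathbb{P}^{\mathcal{G}}_{0,1}{\rm Glob}^{\mathcal{G}}_\ell(Z)\cong\mathcal{G}(1,\ell)\times Z$.
   Context: Work in $\mathbf{Top}$, the category of $\Delta$-generated spaces (or $\Delta$-Hausdorff $\Delta$-generated spaces), cartesian closed with internal hom ${\rm TOP}$ (the $\Delta$-kelleyfication of the compact-open topology); products are taken in $\mathbf{Top}$; subsets carry the $\Delta$-kelleyfication of the relative topology. $\mathcal{G}(\ell_1,\ell_2)$: set of nondecreasing homeomorphisms $[0,\ell_1]\to[0,\ell_2]$, as a subspace of ${\rm TOP}([0,\ell_1],[0,\ell_2])$. A multipointed $d$-space $X=(|X|,X^0,\mathbb{P}^{\mathcal{G}}X)$: a space, a subset of states, a set of continuous execution paths $[0,1]\to|X|$ with endpoints in $X^0$, stable under precomposition by $\mathcal{G}(1,1)$ and normalized composition. $\mathbb{P}^{\mathcal{G}}_{\alpha,\beta}X$, the set of execution paths from $\alpha$ to $\beta$, is a subspace of ${\rm TOP}([0,1],|X|)$. ${\rm Glob}^{\mathcal{G}}_\ell(Z)$: underlying space the quotient of $\{0,1\}\sqcup Z\times[0,\ell]$ identifying every $(z,0)$ with $0$ and every $(z,\ell)$ with $1$; states $\{0,1\}$; execution paths $\delta_z\circ\phi$ for $z\in Z$, $\phi\in\mathcal{G}(1,\ell)$, where $\delta_z(t)=(z,t)$. *)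

(* Defs.v *)
From HB Require Import structures.
From mathcomp Require Import all_boot all_order all_algebra.
From mathcomp Require Import Rstruct.
From Stdlib Require Import List.

Unset Printing Implicit Defensive.
Import Order.TTheory GRing.Theory Num.Theory.
Local Open Scope ring_scope.

Notation R := Rdefinitions.R.

Definition topology (T : Type) := (T -> Prop) -> Prop.

Definition is_topology {T : Type} (tau : topology T) : Prop :=
  tau (fun _ => True) /\ tau (fun _ => False) /\
  (forall U V, tau U -> tau V -> tau (fun x => U x /\ V x)) /\
  (forall F : (T -> Prop) -> Prop, (forall U, F U -> tau U) ->
     tau (fun x => exists U, F U /\ U x)).

Definition continuous_wrt {S T : Type} (sigma : topology S) (tau : topology T)
  (f : S -> T) : Prop := forall U, tau U -> sigma (fun x => U (f x)).

Definition induced {S T : Type} (f : S -> T) (tau : topology T) : topology S :=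
  fun V => exists U, tau U /\ forall x, V x <-> U (f x).

Definition final {S T : Type} (f : S -> T) (sigma : topology S) : topology T :=
  fun U => sigma (fun x => U (f x)).

Definition discrete_top (T : Type) : topology T := fun _ => True.

Definition sum_top {S T : Type} (sigma : topology S) (tau : topology T)
  : topology (S + T) :=
  fun W => sigma (fun x => W (inl x)) /\ tau (fun y => W (inr y)).

Definition prod_top {S T : Type} (sigma : topology S) (tau : topology T)
  : topology (S * T) :=
  fun W => forall p, W p -> exists U V, sigma U /\ tau V /\ U p.1 /\ V p.2 /\
    forall q, U q.1 -> V q.2 -> W q.

Definition generated {X : Type} (B : (X -> Prop) -> Prop) : topology X :=
  fun W => forall x, W x -> exists l : list (X -> Prop),
    (forall b, In b l -> B b) /\ (forall b, In b l -> b x) /\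
    (forall y, (forall b, In b l -> b y) -> W y).

Definition compact_in {T : Type} (tau : topology T) (K : T -> Prop) : Prop :=
  forall C : (T -> Prop) -> Prop, (forall U, C U -> tau U) ->
    (forall x, K x -> exists U, C U /\ U x) ->
    exists l : list (T -> Prop), (forall U, In U l -> C U) /\
      (forall x, K x -> exists U, In U l /\ U x).

Definition homeomorphic {S T : Type} (sigma : topology S) (tau : topology T) : Prop :=
  exists (f : S -> T) (g : T -> S),
    cancel f g /\ cancel g f /\ continuous_wrt sigma tau f /\ continuous_wrt tau sigma g.

Definition euclid_top : topology R :=
  fun U => forall x, U x -> exists e : R, 0 < e /\ forall y, `|y - x| < e -> U y.

Definition simplex (n : nat) :=
  {x : 'I_n.+1 -> R | (forall i, 0 <= x i) /\ \sum_(i < n.+1) x i = 1}.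

Definition simplex_top (n : nat) : topology (simplex n) :=
  fun U => forall x, U x -> exists e : R, 0 < e /\
    forall y : simplex n, (forall i, `|proj1_sig y i - proj1_sig x i| < e) -> U y.

(* Delta-kelleyfication: final topology w.r.t. all continuous maps from simplices *)
Definition kelley {T : Type} (tau : topology T) : topology T :=
  fun U => forall (n : nat) (f : simplex n -> T),
    continuous_wrt (@simplex_top n) tau f -> @simplex_top n (fun x => U (f x)).

Definition Delta_generated {T : Type} (tau : topology T) : Prop :=
  forall U, tau U <-> kelley tau U.

Definition cmap {S T : Type} (sigma : topology S) (tau : topology T) :=
  {f : S -> T | continuous_wrt sigma tau f}.

Definition compact_open {S T : Type} (sigma : topology S) (tau : topology T)
  : topology (cmap sigma tau) :=
  generated (fun W => exists K U, compact_in sigma K /\ tau U /\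
     forall f : cmap sigma tau, W f <-> forall x, K x -> U (proj1_sig f x)).

Definition TOP_top {S T : Type} (sigma : topology S) (tau : topology T)
  : topology (cmap sigma tau) := kelley (compact_open sigma tau).

Definition seg (l : R) := {t : R | (0 <= t <= l)%R}.

Definition seg_top (l : R) : topology (seg l) :=
  kelley (induced (fun t : seg l => val t) euclid_top).

Definition is_G (l1 l2 : R) (f : cmap (seg_top l1) (seg_top l2)) : Prop :=
  (forall s t : seg l1, val s <= val t -> val (proj1_sig f s) <= val (proj1_sig f t)) /\
  exists g : seg l2 -> seg l1,
    cancel (proj1_sig f) g /\ cancel g (proj1_sig f) /\
    continuous_wrt (seg_top l2) (seg_top l1) g.

Definition Gsp (l1 l2 : R) := {f : cmap (seg_top l1) (seg_top l2) | is_G l1 l2 f}.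

Definition G_top (l1 l2 : R) : topology (Gsp l1 l2) :=
  kelley (induced (fun f : Gsp l1 l2 => proj1_sig f) (TOP_top (seg_top l1) (seg_top l2))).

(* Points of the quotient of {0,1} + Z x [0,l]: the two states, and the
   classes of the (z,t) with 0 < t < l (which are singletons). *)
Inductive glob_pt (Z : Type) (l : R) : Type :=
  | glob0 : glob_pt Z l
  | glob1 : glob_pt Z l
  | globint : Z -> {t : R | (0 < t < l)%R} -> glob_pt Z l.
Arguments glob0 {Z l}.
Arguments glob1 {Z l}.

Definition glob_q {Z : Type} (l : R) (p : bool + (Z * seg l)) : glob_pt Z l :=
  match p with
  | inl false => glob0
  | inl true => glob1
  | inr (z, t) =>
      match @insub R (fun u => (0 < u < l)%R) _ (val t) with
      | Some u => @globint Z l z u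
      | None => if val t == 0 then glob0 else glob1
      end
  end.

Definition glob_top {Z : Type} (tauZ : topology Z) (l : R) : topology (glob_pt Z l) :=
  kelley (final (@glob_q Z l)
    (sum_top (discrete_top bool) (kelley (prod_top tauZ (seg_top l))))).

Lemma zero_in_seg1 : (0 <= (0 : R) <= 1)%R.
Proof. by rewrite lexx ler01. Qed.
Lemma one_in_seg1 : (0 <= (1 : R) <= 1)%R.
Proof. by rewrite lexx ler01. Qed.
Definition seg1_0 : seg 1 := exist _ 0 zero_in_seg1.
Definition seg1_1 : seg 1 := exist _ 1 one_in_seg1.

Definition glob_exec {Z : Type} (tauZ : topology Z) (l : R)
  (g : cmap (seg_top 1) (glob_top tauZ l)) : Prop :=
  exists (z : Z) (phi : Gsp 1 l),
    forall t : seg 1, proj1_sig g t = glob_q l (inr (z, proj1_sig (proj1_sig phi) t)).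

Definition Pglob01 {Z : Type} (tauZ : topology Z) (l : R) :=
  {g : cmap (seg_top 1) (glob_top tauZ l) |
     glob_exec tauZ l g /\ proj1_sig g seg1_0 = glob0 /\ proj1_sig g seg1_1 = glob1}.

Definition Pglob01_top {Z : Type} (tauZ : topology Z) (l : R) : topology (Pglob01 tauZ l) :=
  kelley (induced (fun g : Pglob01 tauZ l => proj1_sig g)
                  (TOP_top (seg_top 1) (glob_top tauZ l))).

(* Main.v *)
Require Import Defs.
From mathcomp Require Import all_boot all_order all_algebra.
From mathcomp Require Import Rstruct.
From mathcomp Require Import lra.
From Stdlib Require Import ClassicalEpsilon ProofIrrelevance FunctionalExtensionality List.
Import Order.TTheory GRing.Theory Num.Theory.
Local Open Scope ring_scope.

Lemma absE (x e : R) : `|x| < e <-> (- e < x /\ x < e).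
Proof. by rewrite ltr_norml; split=> [/andP[]|[-> ->]]. Qed.

Definition close {n} (e : R) (y x : simplex n) :=
  forall i, `|proj1_sig y i - proj1_sig x i| < e.

Lemma open_kelley {T} (tau : topology T) U : tau U -> kelley tau U.
Proof. move=> hU n f hf; exact: hf. Qed.

Lemma kelley_True {T} (tau : topology T) : kelley tau (fun _ => True).
Proof. by move=> n f _ x _; exists 1; split=> //; rewrite ltr01. Qed.

Lemma simplex_cont_kelley {T n} {tau : topology T} {f : simplex n -> T} :
  continuous_wrt (@simplex_top n) tau f ->
  continuous_wrt (@simplex_top n) (kelley tau) f.
Proof. move=> hf U hU; exact: hU n f hf. Qed.

Lemma kelley_cont {S T} (a : topology S) (b : topology T) (f : S -> T) :
  (forall n (s : simplex n -> S), continuous_wrt (@simplex_top n) a s ->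
      continuous_wrt (@simplex_top n) b (fun x => f (s x))) ->
  continuous_wrt (kelley a) (kelley b) f.
Proof. move=> h U hU n s hs; exact: (hU n _ (h n s hs)). Qed.

Lemma st_ext {n} {A B : simplex n -> Prop} :
  simplex_top n A -> (forall x, A x <-> B x) -> simplex_top n B.
Proof.
move=> hA hAB x /(proj2 (hAB x)) /hA [e [he H]]; exists e; split=> // y hy.
exact: (proj1 (hAB y) (H y hy)).
Qed.

Lemma list_min {A} (P : R -> A -> Prop) :
  (forall d d' a, 0 < d' -> d' <= d -> P d a -> P d' a) ->
  forall l : list A, (forall a, In a l -> exists d, 0 < d /\ P d a) ->
  exists d, 0 < d /\ forall a, In a l -> P d a.
Proof.
move=> hmono; elim=> [|a l IH] h.
  by exists 1; split=> [|a []]; rewrite ?ltr01.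
have [d1 [h1 p1]] := h a (or_introl erefl).
have [d2 [h2 p2]] := IH (fun b hb => h b (or_intror hb)).
have hm : 0 < Num.min d1 d2 by rewrite lt_min h1 h2.
exists (Num.min d1 d2); split=> // b [<-|hb].
  by apply: hmono p1 => //; rewrite ge_min lexx.
by apply: hmono (p2 b hb) => //; rewrite ge_min lexx orbT.
Qed.

Lemma close_mono {n} {d d' : R} {y x : simplex n} : d <= d' -> close d y x -> close d' y x.
Proof. move=> hd h i; exact: lt_le_trans (h i) hd. Qed.

Lemma gen_cont n X (B : (X -> Prop) -> Prop) (c : simplex n -> X) :
  (forall b, B b -> simplex_top n (fun s => b (c s))) ->
  continuous_wrt (@simplex_top n) (generated B) c.
Proof.
move=> hB W hW s Ws.
have [l [lB [lx lW]]] := hW _ Ws.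
have [d [hd Hd]] := list_min (fun d b => forall y, close d y s -> b (c y))
   (fun d d' b _ hle H y hy => H y (close_mono hle hy)) l
   (fun b hb => hB b (lB b hb) s (lx b hb)).
exists d; split=> // y hy; apply: lW => b hb; exact: Hd b hb y hy.
Qed.

Lemma prod_cont {n X Y} {tx : topology X} {ty : topology Y}
  (a : simplex n -> X) (b : simplex n -> Y) :
  continuous_wrt (@simplex_top n) tx a -> continuous_wrt (@simplex_top n) ty b ->
  continuous_wrt (@simplex_top n) (prod_top tx ty) (fun s => (a s, b s)).
Proof.
move=> ha hb W hW s Ws.
have [U [V [hU [hV [Us [Vs H]]]]]] := hW _ Ws.
have [e1 [he1 H1]] := ha U hU s Us.
have [e2 [he2 H2]] := hb V hV s Vs.
exists (Num.min e1 e2); split; first by rewrite lt_min he1 he2.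
move=> y hy; apply: (H (a y, b y)).
- apply: H1; apply: close_mono hy; by rewrite ge_min lexx.
- apply: H2; apply: close_mono hy; by rewrite ge_min lexx orbT.
Qed.

Lemma fst_cont n X Y (tx : topology X) (ty : topology Y) (s : simplex n -> X * Y) :
  ty (fun _ => True) -> continuous_wrt (@simplex_top n) (prod_top tx ty) s ->
  continuous_wrt (@simplex_top n) tx (fun x => (s x).1).
Proof.
move=> hT hs U hU; apply: (hs (fun p => U p.1)) => p Up.
by exists U, (fun _ => True); do 4 (split=> //).
Qed.

Lemma snd_cont n X Y (tx : topology X) (ty : topology Y) (s : simplex n -> X * Y) :
  tx (fun _ => True) -> continuous_wrt (@simplex_top n) (prod_top tx ty) s ->
  continuous_wrt (@simplex_top n) ty (fun x => (s x).2).
Proof.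
move=> hT hs U hU; apply: (hs (fun p => U p.2)) => p Up.
by exists (fun _ => True), U; do 4 (split=> //).
Qed.

Definition mcont_seg {n l} (f : simplex n -> seg l) :=
  forall x e, 0 < e -> exists d, 0 < d /\
    forall y, close d y x -> `|val (f y) - val (f x)| < e.

Lemma mcont_seg_ind {n l} {f : simplex n -> seg l} : mcont_seg f ->
  continuous_wrt (@simplex_top n) (induced (fun t : seg l => val t) euclid_top) f.
Proof.
move=> hf V [U [hU hV]] x /hV Ux.
have [e [he He]] := hU _ Ux.
have [d [hd Hd]] := hf x e he.
exists d; split=> // y hy; apply/hV; apply: He; exact: Hd y hy.
Qed.

Lemma mcont_seg_cont {n l} {f : simplex n -> seg l} : mcont_seg f ->
  continuous_wrt (@simplex_top n) (seg_top l) f.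
Proof. by move=> hf; apply: simplex_cont_kelley; apply: mcont_seg_ind. Qed.

Lemma comp_mcont m n (p : simplex m -> simplex n) X (tau : topology X) g :
  (forall x e, 0 < e -> exists d, 0 < d /\ forall y, close d y x -> close e (p y) (p x)) ->
  continuous_wrt (@simplex_top n) tau g ->
  continuous_wrt (@simplex_top m) tau (fun x => g (p x)).
Proof.
move=> hp hg U hU x Ux; have [e [he He]] := hg U hU (p x) Ux.
have [d [hd Hd]] := hp x e he; exists d; split=> // y hy; exact: He _ (Hd y hy).
Qed.

Lemma seg_metric_open l (V : seg l -> Prop) :
  (forall x, V x -> exists e, 0 < e /\ forall y : seg l, `|val y - val x| < e -> V y) ->
  seg_top l V.
Proof.
move=> hV; apply: open_kelley.
exists (fun r => exists x : seg l, V x /\ exists e, 0 < e /\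
          (forall y : seg l, `|val y - val x| < e -> V y) /\ `|r - val x| < e).
split.
  move=> r [x [Vx [e [he [He hr]]]]].
  exists (e - `|r - val x|); split; first by rewrite subr_gt0.
  move=> y hy; exists x; split=> //; exists e; do 2 (split=> //).
  have := ler_distD r y (val x); lra.
move=> x; split.
  move=> Vx; have [e [he He]] := hV x Vx.
  by exists x; split=> //; exists e; do 2 (split=> //); rewrite subrr normr0.
by move=> [x' [_ [e [_ [He hr]]]]]; apply: He.
Qed.

Definition p1fun (a : R) : 'I_2 -> R := fun i => if val i == 0%N then 1 - a else a.
Lemma p1P {a : R} : 0 <= a <= 1 ->
  (forall i, 0 <= p1fun a i) /\ \sum_(i < 2) p1fun a i = 1.
Proof.
move=> /andP[h0 h1]; split.
  by move=> i; rewrite /p1fun; case: ifP => _; lra.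
rewrite big_ord_recr big_ord1 /p1fun /=; lra.
Qed.
Definition pt1 {a} (h : 0 <= a <= 1) : simplex 1 := exist _ (p1fun a) (p1P h).

Lemma s1_bound (x : simplex 1) : 0 <= proj1_sig x ord_max <= 1.
Proof.
case: x => f [h0 hs] /=; move: hs; rewrite big_ord_recr big_ord1 /= => hs.
have := h0 (widen_ord (leqnSn 1) ord0); have := h0 ord_max.
move=> ha hb; apply/andP; split; lra.
Qed.

Lemma hmapP {l} (hl : 0 < l) (x : simplex 1) : 0 <= proj1_sig x ord_max * l <= l.
Proof. have /andP[a b] := s1_bound x; apply/andP; split; nra. Qed.
Definition hmap {l} (hl : 0 < l) (x : simplex 1) : seg l := exist (fun t : R => 0 <= t <= l) _ (hmapP hl x).

Lemma hmap_mcont {l} (hl : 0 < l) : mcont_seg (hmap hl).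
Proof.
move=> x e he; exists (e / l); split; first by apply: divr_gt0.
move=> y hy; have /absE [h1 h2] := hy ord_max; apply/absE => /=.
have hl' : l / l = 1 by rewrite divff // gt_eqF.
split; nra.
Qed.

Lemma seg_open_metric {l} (hl : 0 < l) (V : seg l -> Prop) : seg_top l V ->
  forall x, V x -> exists e, 0 < e /\ forall y : seg l, `|val y - val x| < e -> V y.
Proof.
move=> hV x Vx.
have hO := hV 1 (hmap hl) (mcont_seg_ind (hmap_mcont hl)).
have hl' : l / l = 1 by rewrite divff // gt_eqF.
have hdiv : forall y : seg l, 0 <= val y / l <= 1.
  move=> y; have /andP[a b] := valP y; apply/andP; split.
    by apply: divr_ge0 => //; apply: ltW.
  by rewrite ler_pdivrMr // mul1r.
have hpt : forall y : seg l, hmap hl (pt1 (hdiv y)) = y.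
  move=> y; apply: val_inj => /=; rewrite /p1fun /=.
  by rewrite divfK // gt_eqF.
have := hO (pt1 (hdiv x)); rewrite hpt => /(_ Vx) [e [he He]].
exists (e * l); split; first by apply: mulr_gt0.
move=> y hy; rewrite -(hpt y); apply: He => i /=.
have /absE [h1 h2] := hy.
have ex : val x / l * l = val x by rewrite divfK // gt_eqF.
have ey : val y / l * l = val y by rewrite divfK // gt_eqF.
apply/absE; rewrite /p1fun; move: ex ey h1 h2.
change (\val x) with (sval x); change (\val y) with (sval y).
generalize (sval x / l) (sval y / l) (sval x) (sval y) => a b xv yv ex ey h1 h2.
case: ifP => _; split=> /=.
all: nra.
Qed.

Lemma seg_ball_open l (c e : R) : seg_top l (fun u => `|val u - c| < e).
Proof.
apply: seg_metric_open => x hx; exists (e - `|val x - c|); split.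
  by rewrite subr_gt0.
move=> y hy; have := ler_distD (val x) (val y) c; lra.
Qed.

Lemma cmap_mcont {l} (hl : 0 < l) (f : seg 1 -> seg l) :
  continuous_wrt (seg_top 1) (seg_top l) f ->
  forall x e, 0 < e -> exists d, 0 < d /\
    forall y, `|val y - val x| < d -> `|val (f y) - val (f x)| < e.
Proof.
move=> hf x e he.
have h01 : (0 : R) < 1 by exact: ltr01.
have hO := hf _ (seg_ball_open l (val (f x)) e).
have := @seg_open_metric 1 h01 _ hO x.
by rewrite subrr normr0 => /(_ he).
Qed.

Definition gf {l} (p : Gsp 1 l) : seg 1 -> seg l := proj1_sig (proj1_sig p).

Lemma gmono {l} (p : Gsp 1 l) s t : val s <= val t -> val (gf p s) <= val (gf p t).
Proof. exact: (proj1 (proj2_sig p)). Qed.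

Lemma gbij {l} (p : Gsp 1 l) : exists g, cancel (gf p) g /\ cancel g (gf p).
Proof. by case: (proj2 (proj2_sig p)) => g [h1 [h2 _]]; exists g. Qed.

Lemma ginj {l} (p : Gsp 1 l) : injective (gf p).
Proof. case: (gbij p) => g [h1 _]; exact: can_inj h1. Qed.

Lemma gsurj {l} (p : Gsp 1 l) u : exists t, gf p t = u.
Proof. by case: (gbij p) => g [_ h2]; exists (g u). Qed.

Lemma g0 {l} (hl : 0 < l) (p : Gsp 1 l) : val (gf p seg1_0) = 0.
Proof.
have h : (0 <= (0:R) <= l) by rewrite lexx ltW.
case: (gsurj p (exist _ 0 h)) => t ht.
case/andP: (valP t) => ht0 _.
have := @gmono l p seg1_0 t ht0; rewrite ht /= => H.
case/andP: (valP (gf p seg1_0)) => H2 _; apply/eqP; rewrite eq_le H2 andbT; exact: H.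
Qed.

Lemma g1 {l} (hl : 0 < l) (p : Gsp 1 l) : val (gf p seg1_1) = l.
Proof.
have h : (0 <= l <= l) by rewrite lexx ltW.
case: (gsurj p (exist _ l h)) => t ht.
case/andP: (valP t) => _ ht1.
have := @gmono l p t seg1_1 ht1; rewrite ht /= => H.
case/andP: (valP (gf p seg1_1)) => _ H2; apply/eqP; rewrite eq_le H2 /=; exact: H.
Qed.

Lemma half_in : (0 <= (1/2 : R) <= 1).
Proof. apply/andP; split; lra. Qed.
Definition seg1_h : seg 1 := exist _ (1/2) half_in.

Lemma ghalf {l} (hl : 0 < l) (p : Gsp 1 l) : 0 < val (gf p seg1_h) < l.
Proof.
case/andP: (valP (gf p seg1_h)) => a b.
have h0 : val (gf p seg1_h) != 0.
  apply/eqP => E.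
  have : gf p seg1_h = gf p seg1_0 by apply: val_inj; rewrite E (g0 hl p).
  move/ginj => /(congr1 val) /= H; lra.
have h1 : val (gf p seg1_h) != l.
  apply/eqP => E.
  have : gf p seg1_h = gf p seg1_1 by apply: val_inj; rewrite E (g1 hl p).
  move/ginj => /(congr1 val) /= H; lra.
apply/andP; split.
  by rewrite lt_neqAle eq_sym h0 a.
by rewrite lt_neqAle h1 b.
Qed.

Lemma globq_inr {Z : Type} {l} (z : Z) (t : seg l) :
  (exists h : (0 < val t < l), glob_q l (inr (z, t)) = @globint Z l z (exist _ (val t) h)) \/
  (val t = 0 /\ glob_q l (inr (z, t)) = glob0) \/
  (val t = l /\ glob_q l (inr (z, t)) = glob1).
Proof.
rewrite /glob_q; case: insubP => [u hu hv | hn].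
  left; exists hu; congr globint; apply: val_inj; by rewrite /= hv.
right; case/andP: (valP t) => a b.
case: eqP => [E|E]; first by left.
right; split=> //.
move: hn; rewrite negb_and -!leNgt => /orP[H|H].
  by exfalso; apply: E; apply/eqP; rewrite eq_le H a.
by apply/eqP; rewrite eq_le H b.
Qed.

Lemma q_inr_val {Z : Type} {l} (hl : 0 < l) (z z' : Z) (u u' : seg l) :
  glob_q l (inr (z, u)) = glob_q l (inr (z', u')) -> u = u'.
Proof.
case: (globq_inr z u) => [[h ->]|[[e ->]|[e ->]]];
case: (globq_inr z' u') => [[h' ->]|[[e' ->]|[e' ->]]] // H.
- by apply: val_inj; case: H => _ E; exact: E.
- by apply: val_inj; rewrite e e'.
- by apply: val_inj; rewrite e e'.
Qed.

Lemma q_inr_z {Z : Type} {l} (z z' : Z) (u u' : seg l) : 0 < val u < l ->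
  glob_q l (inr (z, u)) = glob_q l (inr (z', u')) -> z = z'.
Proof.
move=> hu.
case: (globq_inr z u) => [[h ->]|[[e _]|[e _]]]; last 2 first.
- by move: hu; rewrite e ltxx.
- by move: hu; rewrite e ltxx andbF.
case: (globq_inr z' u') => [[h' ->]|[[e' ->]|[e' ->]]] // H.
by case: H.
Qed.

Lemma glob_open_of {Z : Type} (tauZ : topology Z) l (U' : glob_pt Z l -> Prop) :
  prod_top tauZ (seg_top l) (fun p => U' (glob_q l (inr p))) -> glob_top tauZ l U'.
Proof.
move=> H; apply: open_kelley; split; first done.
exact: open_kelley.
Qed.

Definition Uq {Z : Type} {l} (U : seg l -> Prop) (g : glob_pt Z l) : Prop :=
  match g with
  | glob0 => exists u : seg l, val u = 0 /\ U u
  | glob1 => exists u : seg l, val u = l /\ U u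
  | globint _ t => exists u : seg l, val u = val t /\ U u
  end.

Lemma Uq_q {Z : Type} {l} (U : seg l -> Prop) (z : Z) (u : seg l) :
  Uq U (glob_q l (inr (z, u))) <-> U u.
Proof.
have key : forall v : R, val u = v -> (exists u' : seg l, val u' = v /\ U u') <-> U u.
  move=> v ev; split; first by case=> u' [e' Uu']; have -> : u = u' by apply: val_inj; rewrite ev e'.
  by move=> Uu; exists u.
case: (globq_inr z u) => [[h ->]|[[e ->]|[e ->]]] /=; exact: key.
Qed.

Lemma Uq_open {Z : Type} {tauZ : topology Z} (hZ : is_topology tauZ) {l} {U : seg l -> Prop} :
  seg_top l U -> glob_top tauZ l (Uq U).
Proof.
move=> hU; apply: glob_open_of => p Hp.
exists (fun _ => True), U; split; first by case: hZ.
split=> //; split=> //; split; first by case: p Hp => z u /Uq_q.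
by move=> [z u] _ /= Uu; apply/Uq_q.
Qed.

Definition Uzq {Z : Type} {l} (U : Z -> Prop) (g : glob_pt Z l) : Prop :=
  match g with
  | globint z _ => U z
  | _ => False
  end.

Lemma Uzq_q {Z : Type} {l} (U : Z -> Prop) (z : Z) (u : seg l) : 0 < val u < l ->
  (Uzq U (glob_q l (inr (z, u))) <-> U z).
Proof.
move=> hu; case: (globq_inr z u) => [[h ->]|[[e _]|[e _]]] //.
- by move: hu; rewrite e ltxx.
- by move: hu; rewrite e ltxx andbF.
Qed.

Lemma interior_open l : seg_top l (fun t => 0 < val t < l).
Proof.
apply: seg_metric_open => x /andP[a b].
exists (Num.min (val x) (l - val x)); split.
  by rewrite lt_min a subr_gt0 b.
move=> y /absE [h1 h2].
have m1 : Num.min (val x) (l - val x) <= val x by rewrite ge_min lexx.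
have m2 : Num.min (val x) (l - val x) <= l - val x by rewrite ge_min lexx orbT.
apply/andP; split; lra.
Qed.

Lemma Uzq_open {Z : Type} {tauZ : topology Z} l {U : Z -> Prop} :
  tauZ U -> glob_top tauZ l (Uzq U).
Proof.
move=> hU; apply: glob_open_of => [[z u]] Hp.
have hu : 0 < val u < l.
  by case: (globq_inr z u) Hp => [[h ->]|[[e ->]|[e ->]]].
exists U, (fun t => 0 < val t < l); split=> //; split; first exact: interior_open.
split; first by move: Hp; rewrite /= (Uzq_q _ _ _ hu).
split=> //.
by move=> [z' u'] /= Uz hu'; apply/(Uzq_q _ _ _ hu').
Qed.

Lemma compact_single {T : Type} (tau : topology T) (t0 : T) :
  compact_in tau (fun t => t = t0).
Proof.
move=> C hC hcov; have [U [CU Ut]] := hcov t0 erefl.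
exists [:: U]; split; first by move=> V [<-|[]].
by move=> x ->; exists U; split=> //; left.
Qed.

Lemma co_open {S T : Type} {sigma : topology S} {tau : topology T} {K U} :
  compact_in sigma K -> tau U ->
  TOP_top sigma tau (fun f => forall x, K x -> U (proj1_sig f x)).
Proof.
move=> hK hU; apply: open_kelley => f Hf.
exists [:: (fun f => forall x, K x -> U (proj1_sig f x))]; split.
  by move=> b [<-|[]]; exists K, U; split=> //; split.
split; first by move=> b [<-|[]].
by move=> y H; apply: (H _ (or_introl erefl)).
Qed.

Definition pz {Z : Type} {tauZ : topology Z} {l} (g : Pglob01 tauZ l) :=
  constructive_indefinite_description _ (proj1 (proj2_sig g)).
Definition Fz {Z : Type} {tauZ : topology Z} {l} (g : Pglob01 tauZ l) : Z :=
  proj1_sig (pz g).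
Definition Fphi {Z : Type} {tauZ : topology Z} {l} (g : Pglob01 tauZ l) : Gsp 1 l :=
  proj1_sig (constructive_indefinite_description _ (proj2_sig (pz g))).
Lemma F_spec {Z : Type} {tauZ : topology Z} {l} (g : Pglob01 tauZ l) t :
  proj1_sig (proj1_sig g) t = glob_q l (inr (Fz g, gf (Fphi g) t)).
Proof.
rewrite /Fphi; case: constructive_indefinite_description => phi H /=.
exact: H.
Qed.
Definition Fmap {Z : Type} {tauZ : topology Z} {l} (g : Pglob01 tauZ l) : Gsp 1 l * Z :=
  (Fphi g, Fz g).

Definition Pind {Z : Type} (tauZ : topology Z) l :=
  induced (fun g : Pglob01 tauZ l => proj1_sig g) (TOP_top (seg_top 1) (glob_top tauZ l)).

Lemma B1 {Z : Type} (tauZ : topology Z) (hZ : is_topology tauZ) l n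
  (sg : simplex n -> Pglob01 tauZ l) :
  continuous_wrt (@simplex_top n) (Pind tauZ l) sg ->
  forall K U, compact_in (seg_top 1) K -> seg_top l U ->
  simplex_top n (fun s => forall t, K t -> U (gf (Fphi (sg s)) t)).
Proof.
move=> hs K U hK hU.
have hO := co_open hK (Uq_open hZ hU).
have := hs _ (ex_intro _ _ (conj hO (fun x => iff_refl _))).
move=> H; apply: (st_ext H) => s /=.
split=> H1 t Kt; have := H1 t Kt; rewrite F_spec; by move/Uq_q.
Qed.

Lemma B2 {Z : Type} (tauZ : topology Z) l (hl : 0 < l) n
  (sg : simplex n -> Pglob01 tauZ l) :
  continuous_wrt (@simplex_top n) (Pind tauZ l) sg ->
  continuous_wrt (@simplex_top n) tauZ (fun s => Fz (sg s)).
Proof.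
move=> hs U hU.
have hO := co_open (compact_single (seg_top 1) seg1_h) (Uzq_open l hU).
have := hs _ (ex_intro _ _ (conj hO (fun x => iff_refl _))).
move=> H; apply: (st_ext H) => s /=; split.
  move=> H1; have := H1 seg1_h erefl; rewrite F_spec.
  by move/(Uzq_q _ _ _ (ghalf hl _)).
move=> H1 t ->; rewrite F_spec; exact/(Uzq_q _ _ _ (ghalf hl _)).
Qed.

Lemma G_cont_of l n (a : simplex n -> Gsp 1 l) :
  (forall K U, compact_in (seg_top 1) K -> seg_top l U ->
     simplex_top n (fun s => forall t, K t -> U (gf (a s) t))) ->
  continuous_wrt (@simplex_top n) (G_top 1 l) a.
Proof.
move=> H; apply: simplex_cont_kelley => A [A0 [hA0 hA]].
have hc : continuous_wrt (@simplex_top n) (compact_open (seg_top 1) (seg_top l))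
            (fun s => proj1_sig (a s)).
  apply: gen_cont => b [K [U [hK [hU hb]]]].
  apply: (st_ext (H K U hK hU)) => s; split; first by move=> h; apply/hb.
  by move/hb.
have := hA0 n _ hc.
move=> H2; apply: (st_ext H2) => s; split; by move/hA.
Qed.

Lemma F_cont {Z : Type} (tauZ : topology Z) (hZ : is_topology tauZ) l (hl : 0 < l) :
  continuous_wrt (Pglob01_top tauZ l) (kelley (prod_top (G_top 1 l) tauZ)) Fmap.
Proof.
apply: kelley_cont => n sg hs.
apply: (prod_cont (fun s => Fphi (sg s)) (fun s => Fz (sg s))).
  by apply: G_cont_of => K U hK hU; exact: (@B1 _ tauZ hZ l n sg hs K U hK hU).
exact: (@B2 _ tauZ l hl n sg hs).
Qed.

Lemma kelley_ext {T} (tau : topology T) (A B : T -> Prop) :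
  kelley tau A -> (forall x, A x <-> B x) -> kelley tau B.
Proof. move=> hA hAB n f hf; apply: (st_ext (hA n f hf)) => x; exact: hAB. Qed.

Lemma st_const n (P : Prop) : simplex_top n (fun _ => P).
Proof. by move=> x HP; exists 1; split=> //; rewrite ltr01. Qed.

Definition Hfun {Z : Type} {l} (p : Gsp 1 l * Z) (t : seg 1) : glob_pt Z l :=
  glob_q l (inr (p.2, gf p.1 t)).

Lemma gf_cont {l} (p : Gsp 1 l) : continuous_wrt (seg_top 1) (seg_top l) (gf p).
Proof. exact: (proj2_sig (proj1_sig p)). Qed.

Lemma H_cont {Z : Type} (tauZ : topology Z) l (p : Gsp 1 l * Z) :
  continuous_wrt (seg_top 1) (glob_top tauZ l) (Hfun p).
Proof.
apply: kelley_cont => n sg hs V hV.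
have hT : continuous_wrt (@simplex_top n) (prod_top tauZ (seg_top l))
            (fun x => (p.2, gf p.1 (sg x))).
  apply: prod_cont; first by move=> U hU; exact: st_const.
  move=> U hU; have := gf_cont p.1 _ hU.
  move=> H; exact: (H n sg hs).
exact: (proj2 hV n _ hT).
Qed.

Definition Hcmap {Z : Type} (tauZ : topology Z) l (p : Gsp 1 l * Z)
  : cmap (seg_top 1) (glob_top tauZ l) := exist _ (Hfun p) (H_cont tauZ l p).

Lemma q_at0 {Z : Type} {l} (hl : 0 < l) (z : Z) (u : seg l) :
  val u = 0 -> glob_q l (inr (z, u)) = glob0.
Proof.
move=> e; case: (globq_inr z u) => [[h _]|[[_ ->]|[e' _]]] //.
- by move: h; rewrite e ltxx.
- exfalso; lra.
Qed.

Lemma q_atl {Z : Type} {l} (hl : 0 < l) (z : Z) (u : seg l) :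
  val u = l -> glob_q l (inr (z, u)) = glob1.
Proof.
move=> e; case: (globq_inr z u) => [[h _]|[[e' _]|[_ ->]]] //.
- by move: h; rewrite e ltxx andbF.
- exfalso; lra.
Qed.

Lemma Hmap_prop {Z : Type} (tauZ : topology Z) l (hl : 0 < l) (p : Gsp 1 l * Z) :
  glob_exec tauZ l (Hcmap tauZ l p) /\ proj1_sig (Hcmap tauZ l p) seg1_0 = glob0 /\
  proj1_sig (Hcmap tauZ l p) seg1_1 = glob1.
Proof.
split; first by exists p.2, p.1.
split; [exact: q_at0 hl _ _ (g0 hl _) | exact: q_atl hl _ _ (g1 hl _)].
Qed.

Definition Hmap {Z : Type} (tauZ : topology Z) l (hl : 0 < l) (p : Gsp 1 l * Z)
  : Pglob01 tauZ l := exist _ (Hcmap tauZ l p) (Hmap_prop tauZ l hl p).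

Lemma PW l n (a : simplex n -> Gsp 1 l) :
  continuous_wrt (@simplex_top n) (G_top 1 l) a ->
  forall s0 t e, 0 < e -> exists d, 0 < d /\ forall s, close d s s0 ->
    `|val (gf (a s) t) - val (gf (a s0) t)| < e.
Proof.
move=> ha s0 t e he.
have hO := co_open (compact_single (seg_top 1) t) (seg_ball_open l (val (gf (a s0) t)) e).
have hA : G_top 1 l (fun p : Gsp 1 l => forall x, x = t ->
             `|val (proj1_sig (proj1_sig p) x) - val (gf (a s0) t)| < e).
  by apply: open_kelley; eexists; split; first exact: hO.
have := ha _ hA s0.
case=> [x -> | d [hd Hd]]; first by rewrite subrr normr0.
exists d; split=> // s hs; exact: Hd s hs t erefl.
Qed.

Definition clampR (lo hi a : R) := if a < lo then lo else if hi < a then hi else a.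

Lemma clamp_spec {lo hi : R} (a : R) : lo <= hi ->
  (clampR lo hi a = a /\ lo <= a /\ a <= hi) \/ (clampR lo hi a = lo /\ a < lo) \/
  (clampR lo hi a = hi /\ hi < a).
Proof.
move=> h; rewrite /clampR; case: ltP => h1; first by right; left.
by case: ltP => h2; [right; right | left].
Qed.

Lemma clamp_bounds lo hi a : lo <= hi -> lo <= clampR lo hi a <= hi.
Proof.
move=> h; apply/andP.
by case: (clamp_spec a h) => [[-> [? ?]]|[[-> ?]|[-> ?]]]; split; lra.
Qed.

Lemma clamp_lip lo hi a b e : lo <= hi -> - e < a - b < e ->
  - e < clampR lo hi a - clampR lo hi b < e.
Proof.
move=> h /andP[h1 h2]; apply/andP.
by case: (clamp_spec a h) => [[-> [? ?]]|[[-> ?]|[-> ?]]];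
 case: (clamp_spec b h) => [[-> [? ?]]|[[-> ?]|[-> ?]]]; split; lra.
Qed.

Lemma clamp01P a : 0 <= clampR 0 1 a <= 1.
Proof. by apply: clamp_bounds; rewrite ler01. Qed.
Definition clamp01 (a : R) : seg 1 := exist (fun t : R => 0 <= t <= 1) _ (clamp01P a).

Lemma clamp_lo {x d : R} : 0 <= x <= 1 -> 0 < d ->
  x - d <= clampR 0 1 (x - d) /\ clampR 0 1 (x - d) <= x /\
  (clampR 0 1 (x - d) = 0 \/ clampR 0 1 (x - d) = x - d).
Proof.
move=> /andP[h1 h2] hd; have h01 : (0:R) <= 1 by rewrite ler01.
by case: (clamp_spec (x - d) h01) => [[-> [? ?]]|[[-> ?]|[-> ?]]];
  (split; [lra|split; [lra|]]); try (by left); try (by right); exfalso; lra.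
Qed.

Lemma clamp_hi {x d : R} : 0 <= x <= 1 -> 0 < d ->
  x <= clampR 0 1 (x + d) /\ clampR 0 1 (x + d) <= x + d /\
  (clampR 0 1 (x + d) = 1 \/ clampR 0 1 (x + d) = x + d).
Proof.
move=> /andP[h1 h2] hd; have h01 : (0:R) <= 1 by rewrite ler01.
by case: (clamp_spec (x + d) h01) => [[-> [? ?]]|[[-> ?]|[-> ?]]];
  (split; [lra|split; [lra|]]); try (by left); try (by right); exfalso; lra.
Qed.

Lemma JC l (hl : 0 < l) n (a : simplex n -> Gsp 1 l) :
  continuous_wrt (@simplex_top n) (G_top 1 l) a ->
  forall s0 (t0 : seg 1) e, 0 < e -> exists d, 0 < d /\ forall s, close d s s0 ->
    forall t : seg 1, `|val t - val t0| < d ->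
      `|val (gf (a s) t) - val (gf (a s0) t0)| < e.
Proof.
move=> ha s0 t0 e he.
have he2 : 0 < e / 2 by lra.
have [dl [hdl Hdl]] := @cmap_mcont l hl _ (gf_cont (a s0)) t0 (e / 2) he2.
have hdl2 : 0 < dl / 2 by lra.
pose tm := clamp01 (val t0 - dl / 2).
pose tp := clamp01 (val t0 + dl / 2).
have [d1 [hd1 H1]] := @PW l n a ha s0 tm _ he2.
have [d2 [hd2 H2]] := @PW l n a ha s0 tp _ he2.
exists (Num.min (dl / 2) (Num.min d1 d2)); split.
  by rewrite !lt_min hdl2 hd1 hd2.
move=> s hs t ht.
have m1 : Num.min (dl / 2) (Num.min d1 d2) <= dl / 2 by rewrite ge_min lexx.
have m2 : Num.min (dl / 2) (Num.min d1 d2) <= d1 by rewrite !ge_min lexx orbT.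
have m3 : Num.min (dl / 2) (Num.min d1 d2) <= d2 by rewrite !ge_min lexx !orbT.
have /absE A1 := H1 s (close_mono m2 hs).
have /absE A2 := H2 s (close_mono m3 hs).
have /absE T := ht.
have vt := valP t; have vt0 := valP t0.
have [L1 [L2 L3]] := clamp_lo vt0 hdl2.
have [U1 [U2 U3]] := clamp_hi vt0 hdl2.
have Etm : val tm = clampR 0 1 (val t0 - dl / 2) by [].
have Etp : val tp = clampR 0 1 (val t0 + dl / 2) by [].
have /absE B1 : `|val (gf (a s0) tm) - val (gf (a s0) t0)| < e / 2.
  apply: Hdl; apply/absE; rewrite Etm; split; lra.
have /absE B2 : `|val (gf (a s0) tp) - val (gf (a s0) t0)| < e / 2.
  apply: Hdl; apply/absE; rewrite Etp; split; lra.
have C1 : val (gf (a s) tm) <= val (gf (a s) t).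
  apply: gmono; rewrite Etm; case/andP: vt => vt1 vt2.
  by case: L3 => ->; lra.
have C2 : val (gf (a s) t) <= val (gf (a s) tp).
  apply: gmono; rewrite Etp; case/andP: vt => vt1 vt2.
  by case: U3 => ->; lra.
apply/absE; split; lra.
Qed.

Lemma coord_le1 {n} (x : simplex n) i : 0 <= proj1_sig x i <= 1.
Proof.
case: x => f [h0 hs] /=; apply/andP; split=> //.
rewrite -hs (bigD1 i) //= lerDl; apply: sumr_ge0 => j _; exact: h0.
Qed.

Lemma coord_ge0 {n} (x : simplex n) i : 0 <= proj1_sig x i.
Proof. by case/andP: (coord_le1 x i). Qed.

Lemma simplex_eq {n} (x y : simplex n) : (forall i, proj1_sig x i = proj1_sig y i) -> x = y.
Proof.
case: x => f hf; case: y => g hg /= H.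
have E : f = g by apply: functional_extensionality.
subst g; f_equal; apply: proof_irrelevance.
Qed.

Lemma simplex_sum {n} (x : simplex n) : \sum_(i < n.+1) proj1_sig x i = 1.
Proof. by case: x => f [_ h] /=. Qed.

Definition ext {n} (a : 'I_n.+1 -> R) (b : R) (j : 'I_n.+2) : R :=
  match unlift ord_max j with Some i => a i | None => b end.

Lemma ext_l {n} a b (i : 'I_n.+1) : ext a b (lift ord_max i) = a i.
Proof. by rewrite /ext liftK. Qed.

Lemma ext_w {n} a b (i : 'I_n.+1) : ext a b (widen_ord (leqnSn n.+1) i) = a i.
Proof.
have -> : widen_ord (leqnSn n.+1) i = lift ord_max i by apply: ord_inj; rewrite lift_max.
exact: ext_l.
Qed.

Lemma ext_m {n} a b : @ext n a b ord_max = b.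
Proof. by rewrite /ext unlift_none. Qed.

Lemma ext_sum {n} a b : \sum_(j < n.+2) @ext n a b j = \sum_(i < n.+1) a i + b.
Proof.
rewrite big_ord_recr /= ext_m; congr (_ + _); apply: eq_bigr => i _; exact: ext_w.
Qed.

Lemma extP {n} (a : 'I_n.+1 -> R) b :
  (forall i, 0 <= a i) -> 0 <= b -> \sum_(i < n.+1) a i + b = 1 ->
  (forall j, 0 <= ext a b j) /\ \sum_(j < n.+2) ext a b j = 1.
Proof.
move=> ha hb hs; split; last by rewrite ext_sum.
by move=> j; rewrite /ext; case: unlift.
Qed.

Definition mkpt {n} (a : 'I_n.+1 -> R) (b : R) ha hb hs : simplex n.+1 :=
  exist _ (@ext n a b) (@extP n a b ha hb hs).

Definition pi_fun {n} (s0 : simplex n) (x : simplex n.+1) (i : 'I_n.+1) : R :=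
  proj1_sig x (widen_ord (leqnSn n.+1) i) + proj1_sig x ord_max * proj1_sig s0 i.

Lemma piP {n} (s0 : simplex n) x :
  (forall i, 0 <= pi_fun s0 x i) /\ \sum_(i < n.+1) pi_fun s0 x i = 1.
Proof.
split.
  move=> i; rewrite /pi_fun; apply: addr_ge0; first exact: coord_ge0.
  by apply: mulr_ge0; apply: coord_ge0.
rewrite /pi_fun big_split /= -mulr_sumr simplex_sum mulr1.
by rewrite -big_ord_recr /= simplex_sum.
Qed.

Definition piM {n} (s0 : simplex n) (x : simplex n.+1) : simplex n :=
  exist _ (pi_fun s0 x) (piP s0 x).

Lemma pi_metric {n} (s0 : simplex n) :
  forall x e, 0 < e -> exists d, 0 < d /\ forall y, close d y x -> close e (piM s0 y) (piM s0 x).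
Proof.
move=> x e he; exists (e / 2); split; first lra.
move=> y hy i; rewrite /= /pi_fun.
have /absE [a1 a2] := hy (widen_ord (leqnSn n.+1) i).
have /absE [b1 b2] := hy ord_max.
have /andP [c1 c2] := coord_le1 s0 i.
move: a1 a2 b1 b2 c1 c2.
generalize (proj1_sig y (widen_ord (leqnSn n.+1) i)) (proj1_sig x (widen_ord (leqnSn n.+1) i))
  (proj1_sig y ord_max) (proj1_sig x ord_max) (proj1_sig s0 i) => p q r t w a1 a2 b1 b2 c1 c2.
apply/absE; split; nra.
Qed.

Definition ucl_val l (u0 : seg l) {n} (x : simplex n.+1) :=
  clampR 0 l (val u0 + (proj1_sig x ord_max - 1 / 2)).

Definition ucl {l} (hl : 0 <= l) (u0 : seg l) {n} (x : simplex n.+1) : seg l :=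
  exist (fun t : R => 0 <= t <= l) (@ucl_val l u0 n x) (clamp_bounds _ _ _ hl).

Lemma ucl_mcont l (hl : 0 <= l) (u0 : seg l) n : mcont_seg (@ucl l hl u0 n).
Proof.
move=> x e he; exists e; split=> // y hy; rewrite /= /ucl_val.
have /absE [b1 b2] := hy ord_max.
apply/absE/andP; apply: clamp_lip => //; apply/andP; split; lra.
Qed.

Lemma In_of_mem {T : eqType} (x : T) (s : list T) : x \in s -> In x s.
Proof.
elim: s => //= y s IH; rewrite seq.in_cons => /orP[/eqP ->|/IH]; [by left|by right].
Qed.

Lemma pos_lb k (F : 'I_k -> R) : exists m, 0 < m /\ forall i, 0 < F i -> m <= F i.
Proof.
have H0 : forall a, In a (enum 'I_k) -> exists d, 0 < d /\ (0 < F a -> d <= F a).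
  move=> a _; case: (boolP (0 < F a)) => h.
    by exists (F a); split=> // _.
  by exists 1; split; [exact: ltr01| move=> h'; move/negP: h].
have [d [hd H]] := list_min (fun d i => 0 < F i -> d <= F i)
  (fun d d' a h1 h2 h3 h4 => le_trans h2 (h3 h4)) (enum 'I_k) H0.
exists d; split=> // i; apply: H; apply: In_of_mem; by rewrite mem_enum.
Qed.

Definition Tmap {Z : Type} {l} (hl : 0 <= l) {n} (zf : simplex n -> Z) (s0 : simplex n)
  (u0 : seg l) (x : simplex n.+1) : Z * seg l :=
  (zf (piM s0 x), ucl hl u0 x).


Lemma aux1 {a b w e m : R} : - e < a - b -> m <= b -> 0 < b -> - e < w -> w < e ->
  e <= m / 4 -> e <= 1 / 4 -> 0 <= a - (1 / 2 + w) * b.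
Proof.
move=> h1 h2 h3 h4 h5 h6 h7.
have : 0 <= (1 / 4 - w) * b by apply: mulr_ge0; lra.
lra.
Qed.

Lemma aux2 {a b w e d : R} : - e < a - b -> a - b < e -> - e < w -> w < e ->
  0 <= b -> b <= 1 -> e <= d / 2 ->
  - d < a - (1 / 2 + w) * b - b / 2 < d.
Proof.
move=> h1 h2 h3 h4 h5 h6 h7.
have p1 : 0 <= (e - w) * b by apply: mulr_ge0; lra.
have p2 : 0 <= (e + w) * b by apply: mulr_ge0; lra.
have p3 : 0 <= e * (1 - b) by apply: mulr_ge0; lra.
apply/andP; split; lra.
Qed.

Lemma LP {Z : Type} (tauZ : topology Z) l (hl : 0 < l) n (zf : simplex n -> Z)
  (hzf : continuous_wrt (@simplex_top n) tauZ zf) (U : glob_pt Z l -> Prop)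
  (hU : glob_top tauZ l U) (s0 : simplex n) (u0 : seg l) :
  U (glob_q l (inr (zf s0, u0))) ->
  exists e, 0 < e /\ forall s, close e s s0 -> forall u : seg l,
    `|val u - val u0| < e -> U (glob_q l (inr (zf s, u))).
Proof.
move=> HU0.
have hl' : 0 <= l by apply: ltW.
pose T := Tmap hl' zf s0 u0.
have hT : continuous_wrt (@simplex_top n.+1) (prod_top tauZ (seg_top l)) T.
  apply: (prod_cont (fun x => zf (piM s0 x)) (fun x => ucl hl' u0 x)).
    exact: comp_mcont (pi_metric s0) hzf.
  exact: mcont_seg_cont (ucl_mcont _ hl' u0 n).
have hc : continuous_wrt (@simplex_top n.+1)
    (final (glob_q l) (sum_top (discrete_top bool) (kelley (prod_top tauZ (seg_top l)))))
    (fun x => glob_q l (inr (T x))).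
  by move=> V hV; exact: (proj2 hV n.+1 T hT).
have hP := hU n.+1 _ hc.
have hs0 : forall i, 0 <= proj1_sig s0 i / 2.
  by move=> i; have := coord_ge0 s0 i; lra.
have hh : (0 : R) <= 1 / 2 by lra.
have hsum : \sum_(i < n.+1) proj1_sig s0 i / 2 + 1 / 2 = 1.
  by rewrite -mulr_suml simplex_sum; lra.
pose x0 := mkpt _ _ hs0 hh hsum.
have E0 : piM s0 x0 = s0.
  apply: simplex_eq => i; rewrite /= /pi_fun /= ext_w ext_m; lra.
have hu0 := valP u0; case/andP: hu0 => hu1 hu2.
have E1 : ucl hl' u0 x0 = u0.
  apply: val_inj; rewrite /= /ucl_val /= ext_m.
  have -> : val u0 + (1 / 2 - 1 / 2) = val u0 by lra.
  by case: (clamp_spec (val u0) hl') => [[-> _]|[[-> ?]|[-> ?]]] //; exfalso; lra.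
have := hP x0; rewrite /T /Tmap E0 E1 => /(_ HU0) [d [hd Hd]].
have [m [hm Hm]] := pos_lb _ (proj1_sig s0).
pose e := Num.min (d / 2) (Num.min (1 / 4) (m / 4)).
have he : 0 < e by rewrite /e !lt_min; apply/and3P; split; lra.
have e1 : e <= d / 2 by rewrite /e ge_min lexx.
have e2 : e <= 1 / 4 by rewrite /e !ge_min lexx orbT.
have e3 : e <= m / 4 by rewrite /e !ge_min lexx !orbT.
exists e; split=> // s hs u hu.
have /absE [hu3 hu4] := hu.
pose h := 1 / 2 + (val u - val u0).
have hpos : forall i, 0 <= proj1_sig s i - h * proj1_sig s0 i.
  move=> i; have := coord_ge0 s0 i; rewrite le0r => /orP[/eqP ->|hp].
    by rewrite mulr0 subr0; exact: coord_ge0.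
  have := Hm i hp; have /absE [k1 k2] := hs i.
  move=> hmi; rewrite /h.
  exact: (aux1 k1 hmi hp hu3 hu4 e3 e2).
have hh' : 0 <= h by rewrite /h; lra.
have hsum' : \sum_(i < n.+1) (proj1_sig s i - h * proj1_sig s0 i) + h = 1.
  by rewrite sumrB -mulr_sumr !simplex_sum; lra.
pose x := mkpt _ _ hpos hh' hsum'.
have Ex : piM s0 x = s.
  apply: simplex_eq => i; rewrite /= /pi_fun /= ext_w ext_m; lra.
have Eu : ucl hl' u0 x = u.
  apply: val_inj; rewrite /= /ucl_val /= ext_m.
  have -> : val u0 + (h - 1 / 2) = val u by rewrite /h; lra.
  have hv := valP u; case/andP: hv => hv1 hv2.
  by case: (clamp_spec (val u) hl') => [[-> _]|[[-> ?]|[-> ?]]] //; exfalso; lra.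
have hx : close d x x0.
  move=> j; rewrite /=; case: (unliftP ord_max j) => [i ->|->].
    rewrite !ext_l; have /absE [k1 k2] := hs i.
    have /andP [c1 c2] := coord_le1 s0 i.
    apply/absE/andP; rewrite /h; exact: (aux2 k1 k2 hu3 hu4 c1 c2 e1).
  by rewrite !ext_m; apply/absE; rewrite /h; split; lra.
have := Hd x hx; by rewrite /T /Tmap Ex Eu.
Qed.

Lemma Hcore {Z : Type} (tauZ : topology Z) (hZ : is_topology tauZ) l (hl : 0 < l) n
  (sg : simplex n -> Gsp 1 l * Z) :
  continuous_wrt (@simplex_top n) (prod_top (G_top 1 l) tauZ) sg ->
  forall K U, compact_in (seg_top 1) K -> glob_top tauZ l U ->
  simplex_top n (fun s => forall t, K t -> U (Hfun (sg s) t)).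
Proof.
move=> hs K U hK hU s0 H0.
have hz : continuous_wrt (@simplex_top n) tauZ (fun s => (sg s).2).
  exact: (@snd_cont n _ _ _ _ sg (kelley_True _) hs).
have hp : continuous_wrt (@simplex_top n) (G_top 1 l) (fun s => (sg s).1).
  exact: (@fst_cont n _ _ _ _ sg (proj1 hZ) hs).
pose good (s : simplex n) (t : seg 1) := U (glob_q l (inr ((sg s).2, gf (sg s).1 t))).
pose C := fun V : seg 1 -> Prop => exists (t0 : seg 1) (d : R), 0 < d /\
   (forall t : seg 1, V t <-> `|val t - val t0| < d) /\
   forall s : simplex n, close d s s0 -> forall t : seg 1, `|val t - val t0| < d -> good s t.
have hC : forall V, C V -> seg_top 1 V.
  move=> V; rewrite /C; move=> [t0 [d [_ [hV _]]]].
  apply: (kelley_ext _ _ _ (seg_ball_open 1 (val t0) d)) => t; split; first by move/(proj2 (hV t)).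
  by move/(proj1 (hV t)).
have hcov : forall t0, K t0 -> exists V, C V /\ V t0.
  move=> t0 Kt0.
  have [e [he He]] := @LP Z tauZ l hl n (fun s => (sg s).2) hz U hU s0
                        (gf (sg s0).1 t0) (H0 t0 Kt0).
  have [d1 [hd1 Hd1]] := @JC l hl n _ hp s0 t0 e he.
  have hd : 0 < Num.min e d1 by rewrite lt_min he hd1.
  have m1 : Num.min e d1 <= e by rewrite ge_min lexx.
  have m2 : Num.min e d1 <= d1 by rewrite ge_min lexx orbT.
  exists (fun t => `|val t - val t0| < Num.min e d1); split; last by rewrite subrr normr0.
  rewrite /C; exists t0, (Num.min e d1); split=> //; split=> // s hsd t ht.
  apply: (He s (close_mono m1 hsd)).
  exact: (Hd1 s (close_mono m2 hsd) t (lt_le_trans ht m2)).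
have [L [LC Lcov]] := hK C hC hcov.
have [d [hd Hd]] := list_min (fun d V => forall s, close d s s0 -> forall t, V t -> good s t)
  (fun d d' V _ hle H s hs => H s (close_mono hle hs)) L
  (fun V hV => match LC V hV with
     | ex_intro t0 (ex_intro d (conj hd (conj hVd Hg))) =>
         ex_intro _ d (conj hd (fun s hs t Vt => Hg s hs t (proj1 (hVd t) Vt)))
     end).
exists d; split=> // s hss t Kt.
have [V [inV Vt]] := Lcov t Kt.
exact: Hd V inV s hss t Vt.
Qed.

Lemma H_cont_all {Z : Type} (tauZ : topology Z) (hZ : is_topology tauZ) l (hl : 0 < l) :
  continuous_wrt (kelley (prod_top (G_top 1 l) tauZ)) (Pglob01_top tauZ l) (Hmap tauZ l hl).
Proof.
apply: kelley_cont => n sg hs V [V0 [hV0 hV]].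
have hc : continuous_wrt (@simplex_top n) (compact_open (seg_top 1) (glob_top tauZ l))
            (fun s => Hcmap tauZ l (sg s)).
  apply: gen_cont => b [K [U [hK [hU hb]]]].
  apply: (st_ext (@Hcore Z tauZ hZ l hl n sg hs K U hK hU)) => s; split.
    exact: (proj2 (hb (Hcmap tauZ l (sg s)))).
  exact: (proj1 (hb (Hcmap tauZ l (sg s)))).
have := hV0 n _ hc.
move=> H; apply: (st_ext H) => s; split; [exact: (proj2 (hV (Hmap tauZ l hl (sg s)))) | exact: (proj1 (hV (Hmap tauZ l hl (sg s))))].
Qed.

Lemma sig_eq {A : Type} {P : A -> Prop} (x y : sig P) : proj1_sig x = proj1_sig y -> x = y.
Proof.
case: x => a ha; case: y => b hb /= E; subst b; f_equal; apply: proof_irrelevance.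
Qed.

Lemma cancelFH {Z : Type} (tauZ : topology Z) l (hl : 0 < l) :
  cancel (@Fmap Z tauZ l) (Hmap tauZ l hl).
Proof.
move=> g; apply: sig_eq; apply: sig_eq => /=.
apply: functional_extensionality => t; rewrite /Hfun /=; by rewrite F_spec.
Qed.

Lemma cancelHF {Z : Type} (tauZ : topology Z) l (hl : 0 < l) :
  cancel (Hmap tauZ l hl) (@Fmap Z tauZ l).
Proof.
case=> phi z.
have E : forall t, glob_q l (inr (z, gf phi t)) =
   glob_q l (inr (Fz (Hmap tauZ l hl (phi, z)), gf (Fphi (Hmap tauZ l hl (phi, z))) t)).
  by move=> t; rewrite -F_spec.
rewrite /Fmap; f_equal.
  apply: sig_eq; apply: sig_eq; apply: functional_extensionality => t.
  exact (esym (q_inr_val hl _ _ _ _ (E t))).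
by symmetry; apply: (q_inr_z _ _ _ _ (ghalf hl phi) (E seg1_h)).
Qed.

Theorem proposition2p12 (Z : Type) (tauZ : topology Z)
  (hZ : is_topology tauZ) (hZD : Delta_generated tauZ) (l : R) (hl : 0 < l) :
  homeomorphic (Pglob01_top tauZ l)
               (kelley (prod_top (G_top 1 l) tauZ)).
Proof.
exists (@Fmap Z tauZ l), (Hmap tauZ l hl).
split; first exact: cancelFH.
split; first exact: cancelHF.
split; first exact: F_cont.
exact: H_cont_all.
Qed.
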